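(* Let $\gamma=(\gamma_1,\dots,\gamma_b)$ be a parallel map on $V=V_1\oplus\cdots\oplus V_b$, $V_i\cong(\mathbb F_2)^m$, with $0\gamma=0$. Suppose every $\gamma_i$ is differentially $2^r$-uniform with $r<m-1$ and strongly $r$-anti-invariant. If $\gamma$ maps $\mathcal{LA}_U(W_1|W_2)$ onto a non-trivial partition $\mathcal{LA}_{U'}(W_1'|W_2')$, where $U,U'$ satisfy $J_U\cap J_{U'}=\emptyset$, then $W_1,W_1',W_2,W_2'$ are walls and $W_1=W_1'=W_2=W_2'$; in particular both partitions are linear.
   Context: Let $m,b>1$, $n=mb$, $V=(\mathbb F_2)^n=V_1\oplus\cdots\oplus V_b$, $V_i\cong(\mathbb F_2)^m$. Permutations act on the right. A parallel map is $\gamma\in\mathrm{Sym}(V)$ with $(v_1\oplus\cdots\oplus v_b)\gamma=v_1\gamma_1\oplus\cdots\oplus v_b\gamma_b$, $\gamma_i\in\mathrm{Sym}(V_i)$. A wall is $\bigoplus_{i\in I}V_i$ with $\emptyset\ne I\subsetneq\{1,\dots,b\}$. For a subspace $U$ of dimension $n-1$, $J_U=\{j:V_j\cap U\subsetneq V_j\}$. $f:(\mathbb F_2)^m\to(\mathbb F_2)^m$ is differentially $\delta$-uniform if $\delta=\max_{a\ne0,b}|\{x:f(x+a)+f(x)=b\}|$; for $f(0)=0$ and $1\le r<m$, $f$ is strongly $r$-anti-invariant if for all subspaces $A,B$ of $(\mathbb F_2)^m$ with $f(A)=B$, either $\dim A=\dim B<m-r$ or $A=B=(\mathbb F_2)^m$.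 A permutation maps $\mathcal A$ onto $\mathcal B$ if it sends the blocks of $\mathcal A$ exactly onto those of $\mathcal B$; trivial partitions are the singleton partition and $\{V\}$. $\mathcal L(W)=\{W+v:v\in V\}$ (linear partition). For a subspace $U$ of dimension $n-1$ and subspaces $W_1,W_2\subseteq U$, $\mathcal{LA}_U(W_1|W_2)=\{W_1+v:v\in U\}\cup\{(W_2+\bar v)+v:v\in U\}$ for any $\bar v\in V\setminus U$. *)

(* Defs.v *)
From mathcomp Require Import all_boot all_order all_algebra all_fingroup.
Set Implicit Arguments. Unset Strict Implicit. Unset Printing Implicit Defensive.
Import GRing.Theory.
Local Open Scope ring_scope.

(* V = (F_2)^(m*b) = V_1 (+) ... (+) V_b is encoded as the space of b x m
   matrices over F_2: row i is the component in V_i = (F_2)^m. *)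
Notation blk m := 'rV['F_2]_m.
Notation VV b m := 'M['F_2]_(b, m).

Section Defs.
Variables (b m : nat).

Definition parallel (g : 'I_b -> {perm blk m}) (x : VV b m) : VV b m :=
  \matrix_(i, j) (g i (row i x)) 0 j.

Definition Vblk (i : 'I_b) : {vspace VV b m} :=
  <<[seq delta_mx i k | k : 'I_m]>>%VS.

Definition wall (W : {vspace VV b m}) : Prop :=
  exists I : {set 'I_b}, [/\ I != set0, I != setT & W = (\sum_(i in I) Vblk i)%VS].

Definition Jset (U : {vspace VV b m}) : {set 'I_b} :=
  [set j | (Vblk j :&: U != Vblk j)%VS].

Definition coset (W : {vspace VV b m}) (v : VV b m) : {set VV b m} :=
  [set x | x - v \in W].

Definition Lpart (W : {vspace VV b m}) : {set {set VV b m}} :=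
  [set coset W v | v : VV b m].

(* LA_U(W1|W2), with vbar a chosen element of V \ U (the definition does not
   depend on the choice when dim U = n-1 and W2 <= U). *)
Definition LA (U W1 W2 : {vspace VV b m}) : {set {set VV b m}} :=
  let vbar := odflt 0 [pick x : VV b m | x \notin U] in
  [set coset W1 v | v in [set x : VV b m | x \in U]] :|:
  [set coset W2 (vbar + v) | v in [set x : VV b m | x \in U]].

Definition singleton_partition : {set {set VV b m}} := [set [set x] | x : VV b m].
Definition full_partition : {set {set VV b m}} := [set [set: VV b m]].
Definition nontrivial (P : {set {set VV b m}}) : Prop :=
  P != singleton_partition /\ P != full_partition.

Definition maps_onto (f : VV b m -> VV b m) (A B : {set {set VV b m}}) : Prop :=
  [set [set f x | x in X] | X : {set VV b m} in A] = B.

End Defs.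

Section Sbox.
Variable m : nat.

Definition diff_uniform (f : blk m -> blk m) (delta : nat) : Prop :=
  delta = (\max_(a : blk m | a != 0%R) \max_(c : blk m)
             #|[set x : blk m | (f (x + a) + f x == c)%R]|)%N.

Definition strongly_anti_invariant (r : nat) (f : blk m -> blk m) : Prop :=
  [/\ f 0 = 0, (1 <= r < m)%N &
   forall A B : {vspace blk m},
     [set f x | x in [set y : blk m | y \in A]] = [set y : blk m | y \in B] ->
     (\dim A = \dim B /\ (\dim B < m - r)%N) \/ (A = fullv /\ B = fullv)].

End Sbox.

(* Main.v *)
Require Import Defs.
From mathcomp Require Import all_boot all_order all_algebra all_fingroup.
From mathcomp Require Import all_field zify.
Set Implicit Arguments. Unset Strict Implicit. Unset Printing Implicit Defensive.
Import GRing.Theory.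
Local Open Scope ring_scope.


Section Basics.
Variables (b m : nat).
Implicit Types (x y : VV b m) (t s : blk m).

Lemma two0 : (2%:R : 'F_2) = 0. Proof. by apply/eqP. Qed.
Lemma negF2 (e : 'F_2) : - e = e.
Proof. apply/eqP; rewrite eq_sym -subr_eq0 opprK -mulr2n -mulr_natr two0 mulr0 //. Qed.
Lemma oppF2 p q (x : 'M['F_2]_(p, q)) : - x = x.
Proof. by apply/matrixP=> i j; rewrite mxE negF2. Qed.

Lemma addF2_eq0 p q (x y : 'M['F_2]_(p, q)) : (x + y == 0) = (x == y).
Proof. by rewrite -{1}(oppF2 y) subr_eq0. Qed.

Definition emb (l : 'I_b) t : VV b m := delta_mx l (0 : 'I_1) *m t.

Lemma emb_entry l t i j : emb l t i j = if i == l then t 0 j else 0.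
Proof.
rewrite /emb mxE (bigD1 (0 : 'I_1)) //= big1 ?addr0; last first.
  by move=> k; rewrite ord1 eqxx.
by rewrite mxE eqxx andbT; case: (i == l); rewrite ?mul1r ?mul0r.
Qed.

Lemma row_emb l t i : row i (emb l t) = if i == l then t else 0.
Proof.
by apply/rowP=> j; rewrite mxE emb_entry; case: (i == l); rewrite ?mxE // (ord1 0).
Qed.

Lemma embD l t s : emb l (t + s) = emb l t + emb l s.
Proof. by rewrite /emb mulmxDr. Qed.
Lemma embB l t s : emb l (t - s) = emb l t - emb l s.
Proof. by rewrite /emb mulmxBr. Qed.
Lemma emb0 l : emb l 0 = 0.
Proof. by rewrite /emb mulmx0. Qed.

Lemma row_parallel g i x : row i (parallel g x) = g i (row i x).
Proof. by apply/rowP=> j; rewrite !mxE. Qed.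

Lemma emb_inj l : injective (emb l).
Proof. by move=> t s /(congr1 (row l)); rewrite !row_emb eqxx. Qed.

Lemma sum_emb x : x = \sum_i emb i (row i x).
Proof.
apply/matrixP=> i j; rewrite summxE (bigD1 i) //= big1 ?addr0.
  by rewrite emb_entry eqxx mxE.
by move=> k; rewrite emb_entry eq_sym => /negbTE ->.
Qed.

End Basics.

Section B2.
Variables (b m : nat).
Implicit Types (x y : VV b m) (t s : blk m) (l : 'I_b).
Implicit Types (g : 'I_b -> {perm blk m}).

Definition embL (l : 'I_b) : 'Hom(blk m, VV b m) := linfun (mulmx (@delta_mx _ b 1 l 0)).
Lemma embLE l t : embL l t = emb l t.
Proof. by rewrite lfunE. Qed.

Lemma emb_Vblk l t : emb l t \in Vblk m l.
Proof.
have ->: emb l t = \sum_k t 0 k *: delta_mx l k.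
  apply/matrixP=> i j; rewrite emb_entry summxE (bigD1 j) //= big1 ?addr0.
    by rewrite !mxE eqxx andbT; case: (i == l); rewrite ?mulr1 ?mulr0.
  by move=> k; rewrite eq_sym => /negbTE nkj; rewrite !mxE nkj andbF mulr0.
apply: rpred_sum => k _; apply: rpredZ; apply: memv_span.
by apply/map_f; rewrite mem_enum.
Qed.

Lemma Vblk_emb l x : x \in Vblk m l -> x = emb l (row l x).
Proof.
have: (Vblk m l <= limg (embL l))%VS.
  apply/span_subvP => y /mapP [k _ ->].
  have ->: delta_mx l k = emb l (delta_mx 0 k).
    apply/matrixP=> i j; rewrite emb_entry !mxE; case: (i == l) => //.
  by rewrite -embLE memv_img ?memvf.
move/subvP=> H /H /memv_imgP [t _ ->]; rewrite embLE row_emb eqxx //.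
Qed.

Lemma Vblk_sub l (W : {vspace VV b m}) :
  (Vblk m l <= W)%VS = [forall t, emb l t \in W].
Proof.
apply/subvP/forallP => [H t | H x /Vblk_emb ->]; last exact: H.
by apply: H; apply: emb_Vblk.
Qed.

Lemma parallel_emb g l t : (forall i, g i 0 = 0) ->
  parallel g (emb l t) = emb l (g l t).
Proof.
move=> g0; apply/row_matrixP=> i; rewrite row_parallel !row_emb.
by case: eqP => [->|].

Qed.

Lemma parallel_inj g : injective (parallel g).
Proof.
move=> x y E; apply/row_matrixP=> i.
by apply: (@perm_inj _ (g i)); rewrite -!row_parallel E.
Qed.

Definition pinv (g : 'I_b -> {perm blk m}) i := ((g i)^-1)%g.
Lemma parallelK g : cancel (parallel g) (parallel (pinv g)).
Proof. by move=> x; apply/row_matrixP=> i; rewrite !row_parallel permK. Qed.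
Lemma parallelKV g : cancel (parallel (pinv g)) (parallel g).
Proof. by move=> x; apply/row_matrixP=> i; rewrite !row_parallel permKV. Qed.

End B2.


Lemma F2cases (k : 'F_2) : k = 0 \/ k = 1.
Proof.
have : (nat_of_ord k < 2)%N by case: k.
case: k => [[|[|n]] Hn] _ /=.
- by left; apply/val_inj.
- by right; apply/val_inj.
- by [].
Qed.

Section B3.
Variables (b m : nat).
Implicit Types (x y : VV b m) (t s : blk m) (l : 'I_b).
Implicit Types (g : 'I_b -> {perm blk m}).

Lemma dimfull : \dim (fullv : {vspace VV b m}) = (b * m)%N.
Proof. by rewrite dimvf dim_matrix. Qed.

Lemma hyp_full (U : {vspace VV b m}) x :
  \dim U = (m * b).-1 -> (0 < m * b)%N -> x \notin U -> (U + <[x]> = fullv)%VS.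
Proof.
move=> dU mb0 xU; apply/eqP; rewrite eqEdim subvf dimfull /=.
have sUS : (U <= U + <[x]>)%VS by apply: addvSl.
have: U != (U + <[x]>)%VS.
  apply: contra xU => /eqP ->; apply/memv_addP; exists 0; first exact: mem0v.
  by exists x; rewrite ?add0r ?memv_line.
rewrite -(ltn_leqif (dimv_leqif_eq sUS)) dU => H.
rewrite mulnC; move: H; rewrite -(prednK mb0); done.
Qed.

Lemma hyp2 (U : {vspace VV b m}) x y :
  \dim U = (m * b).-1 -> (0 < m * b)%N -> x \notin U -> y \notin U -> x - y \in U.
Proof.
move=> dU mb0 xU yU.
have: x \in (U + <[y]>)%VS by rewrite hyp_full ?memvf.
case/memv_addP => u Uu [v /vlineP [k ->] xE]; rewrite xE in xU *.
case: (F2cases k) => kE; rewrite kE in xU *.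
  by rewrite scale0r addr0 Uu in xU.
by rewrite scale1r addrK.
Qed.

Lemma notfull (U : {vspace VV b m}) :
  \dim U = (m * b).-1 -> (0 < m * b)%N -> exists x, x \notin U.
Proof.
move=> dU mb0; case: (boolP [exists x, x \notin U]) => [/existsP //|/existsPn H].
have: (fullv <= U)%VS by apply/subvP=> x _; move: (H x); rewrite negbK.
move/dimvS; rewrite dimfull dU mulnC; rewrite -{1}(prednK mb0).
by rewrite ltnn.
Qed.

Lemma inJ (U : {vspace VV b m}) l : (l \in Jset U) = ~~ (Vblk m l <= U)%VS.
Proof.
by rewrite inE; congr (~~ _); apply/eqP/idP => [<-|/capv_idPl //]; apply: capvSr.
Qed.

Lemma inJP (U : {vspace VV b m}) l :
  reflect (exists t, emb l t \notin U) (l \in Jset U).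
Proof.
rewrite inJ Vblk_sub; apply: (iffP idP).
  by move/forallPn.
by case=> t H; apply/forallPn; exists t.
Qed.

Lemma notinJ (U : {vspace VV b m}) l t : l \notin Jset U -> emb l t \in U.
Proof. by rewrite inJ negbK Vblk_sub => /forallP. Qed.

Lemma J_nonempty (U : {vspace VV b m}) :
  \dim U = (m * b).-1 -> (0 < m * b)%N -> exists l, l \in Jset U.
Proof.
move=> dU mb0; case: (notfull dU mb0) => x xU.
apply/existsP; apply: contraR xU => /existsPn H.
rewrite (sum_emb x); apply: rpred_sum => i _; apply: notinJ; exact: H.
Qed.

End B3.


Section B4.
Variables (b m : nat).
Implicit Types (x y z : VV b m) (t s : blk m) (l : 'I_b).
Implicit Types (U W : {vspace VV b m}).

Lemma memB_eq W a c d : a - c \in W -> (d - a \in W) = (d - c \in W).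
Proof.
move=> H; have ->: d - c = (d - a) + (a - c) by rewrite addrA subrK.
by rewrite (rpredDr _ H).
Qed.

Definition Rel U W1 W2 x y : bool := if x \in U then y - x \in W1 else y - x \in W2.

Lemma Rel_refl U W1 W2 x : Rel U W1 W2 x x.
Proof. by rewrite /Rel subrr !mem0v; case: ifP. Qed.

Definition vbar U : VV b m := odflt 0 [pick x : VV b m | x \notin U].

Lemma vbar_notin U : (exists x, x \notin U) -> vbar U \notin U.
Proof.
case=> x xU; rewrite /vbar; case: pickP => [z Hz //|H].
by move: (H x); rewrite xU.
Qed.

Section LAfacts.
Variables (U W1 W2 : {vspace VV b m}).
Hypotheses (dU : \dim U = (m * b).-1) (mb0 : (0 < m * b)%N)
  (s1 : (W1 <= U)%VS) (s2 : (W2 <= U)%VS).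

Lemma LA_block X x : X \in LA U W1 W2 -> x \in X -> X = [set y | Rel U W1 W2 x y].
Proof.
have vb := vbar_notin (notfull dU mb0).
rewrite /LA inE => /orP [] /imsetP [v]; rewrite inE => vU -> ; rewrite inE => xv.
  have xU : x \in U.
    have ->: x = (x - v) + v by rewrite subrK.
    by rewrite rpredD // (subvP s1).
  by apply/setP => y; rewrite !inE /Rel xU (memB_eq _ xv).
have xU : x \notin U.
  apply: contra vb => xU.
  rewrite -(addrK v (vbar U)).
  have ->: vbar U + v = x - (x - (vbar U + v)) by rewrite opprB addrCA subrr addr0.

  by rewrite rpredB // rpredB // (subvP s2).
by apply/setP => y; rewrite !inE /Rel (negbTE xU) (memB_eq _ xv).
Qed.

Lemma LA_mem x : [set y | Rel U W1 W2 x y] \in LA U W1 W2.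
Proof.
have vb := vbar_notin (notfull dU mb0).
case: (boolP (x \in U)) => xU.
  have ->: [set y | Rel U W1 W2 x y] = Defs.coset W1 x.
    by apply/setP=> y; rewrite !inE /Rel xU.
  by rewrite /LA inE; apply/orP; left; apply: imset_f; rewrite inE.
have ->: [set y | Rel U W1 W2 x y] = Defs.coset W2 (vbar U + (x - vbar U)).
  have e : vbar U + (x - vbar U) = x by rewrite addrC subrK.
  by apply/setP=> y; rewrite !inE /Rel (negbTE xU) e.
by rewrite /LA inE; apply/orP; right; apply: imset_f; rewrite inE hyp2.
Qed.

End LAfacts.


Lemma Rel_map (f : VV b m -> VV b m) U W1 W2 U' W1' W2' :
  injective f ->
  \dim U = (m * b).-1 -> \dim U' = (m * b).-1 -> (0 < m * b)%N ->
  (W1 <= U)%VS -> (W2 <= U)%VS -> (W1' <= U')%VS -> (W2' <= U')%VS ->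
  maps_onto f (LA U W1 W2) (LA U' W1' W2') ->
  forall x y, Rel U W1 W2 x y = Rel U' W1' W2' (f x) (f y).
Proof.
move=> finj dU dU' mb0 s1 s2 s1' s2' Hmap x y; apply/idP/idP => H.
  have XP := LA_mem W1 W2 dU mb0 x.
  have YP : [set f z | z in [set y | Rel U W1 W2 x y]] \in LA U' W1' W2'.
    by rewrite -Hmap; apply: imset_f.
  have xX : x \in [set y | Rel U W1 W2 x y] by rewrite inE Rel_refl.
  have E := LA_block dU' mb0 s1' s2' YP (imset_f f xX).
  have : f y \in [set f z | z in [set y | Rel U W1 W2 x y]] by apply: imset_f; rewrite inE.
  by rewrite E inE.
have YP := LA_mem W1' W2' dU' mb0 (f x).
move: (YP); rewrite -Hmap => /imsetP [X XP E].
have fxX : f x \in [set f z | z in X] by rewrite -E inE Rel_refl.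
have fyX : f y \in [set f z | z in X] by rewrite -E inE.
rewrite mem_imset // in fxX; rewrite mem_imset // in fyX.
by move: fyX; rewrite (LA_block dU mb0 s1 s2 XP fxX) inE.
Qed.

End B4.


Lemma count_fun (T R : finType) (X : {set T}) (S : {set R}) (phi : T -> R) k :
  (forall x, x \in X -> phi x \in S) ->
  (forall s, s \in S -> #|[set x in X | phi x == s]| <= k)%N ->
  (#|X| <= #|S| * k)%N.
Proof.
move=> HS Hk.
rewrite -sum1_card (partition_big phi (mem S)) //=.
rewrite -sum_nat_const; apply: leq_sum => s sS.
apply: leq_trans (Hk s sS); rewrite -sum1_card; apply: eq_leq.
by apply: eq_bigl => x; rewrite inE.
Qed.

Section Loc.
Variable m : nat.
Implicit Types (t s u : blk m).

Lemma card_blk : #|{: blk m}| = (2 ^ m)%N.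
Proof. by rewrite card_mx card_Fp // mul1n. Qed.

Lemma card_vs (E : {vspace blk m}) : #|E| = (2 ^ \dim E)%N.
Proof. by rewrite card_vspace card_Fp. Qed.

Lemma card_vs_set (E : {vspace blk m}) : #|[set u | u \in E]| = (2 ^ \dim E)%N.
Proof. by rewrite cardsE card_vs. Qed.

Definition DU (f : blk m -> blk m) k :=
  forall a c, a != 0 -> (#|[set x | (f (x + a) + f x == c)%R]| <= k)%N.

Definition AI (f : blk m -> blk m) r :=
  forall A B : {vspace blk m},
     [set f x | x in [set y : blk m | y \in A]] = [set y : blk m | y \in B] ->
     (\dim A = \dim B /\ (\dim B < m - r)%N) \/ (A = fullv /\ B = fullv).

Lemma DU_of (f : blk m -> blk m) d : diff_uniform f d -> DU f d.
Proof.
move=> -> a c a0.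
rewrite (bigD1 a a0) /=; apply: leq_trans (leq_maxl _ _).
by rewrite (bigD1 c) //=; apply: leq_maxl.
Qed.

Lemma AI_of (f : blk m -> blk m) r : strongly_anti_invariant r f -> AI f r.
Proof. by case. Qed.

Lemma addF2_eq (u v : blk m) : (u + v == 0) = (u == v).
Proof. by rewrite -{1}(oppF2 v) subr_eq0. Qed.

Lemma F2sol (u v w : blk m) : u + v = w -> u = w + v.
Proof. by move<-; rewrite -{2}(oppF2 v) addrK. Qed.

Lemma DU_inv (f : {perm blk m}) k : DU f k -> DU (f^-1)%g k.
Proof.
move=> H a c a0.
have [->|c0] := eqVneq c 0.
  rewrite (_ : [set x | _] = set0) ?cards0 //; apply/setP => y; rewrite !inE.
  apply/negP => /eqP /F2sol; rewrite add0r => /perm_inj E.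
  have : a = 0 by rewrite -(addKr y a) E addNr.
  by move/eqP; rewrite (negbTE a0).
apply: leq_trans (H c a c0).
rewrite -(card_imset _ (@perm_inj _ (f^-1)%g)); apply: subset_leq_card.
apply/subsetP => x; case/imsetP => y; rewrite inE => /eqP /F2sol E ->; rewrite inE.
have yy : y + y = 0 by rewrite -{2}(oppF2 y) subrr.
by rewrite (addrC _ c) -E !permKV addrAC yy add0r.
Qed.

Lemma AI_inv (f : {perm blk m}) r : AI f r -> AI (f^-1)%g r.
Proof.
move=> H A B E.
have E' : [set f x | x in [set y : blk m | y \in B]] = [set y : blk m | y \in A].
  apply/setP => z; rewrite inE; apply/imsetP/idP => [[y]|zA].
    rewrite -E => /imsetP [x]; rewrite inE => xA -> ->; by rewrite permKV.
  exists ((f^-1)%g z); last by rewrite permKV.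
  by rewrite -E; apply: imset_f; rewrite inE.
case: (H _ _ E') => [[d1 d2]|[-> ->]]; [left|right] => //.
by split; rewrite d1.
Qed.

End Loc.


Section Loc2.
Variable m : nat.
Implicit Types (t s u : blk m).

Lemma exp_arith (M d r : nat) :
  (2 ^ M <= (2 ^ d + 2 ^ d - 1) * 2 ^ r)%N -> (M <= d + r)%N.
Proof.
move=> H; rewrite leqNgt; apply/negP => lt.
have : (2 ^ (d + r).+1 <= 2 ^ M)%N by rewrite leq_exp2l.
rewrite expnS expnD.
have e0 : (0 < 2 ^ d)%N by rewrite expn_gt0.
have r0 : (0 < 2 ^ r)%N by rewrite expn_gt0.
move: H e0 r0; set E := (2 ^ d)%N; set R := (2 ^ r)%N; set MM := (2 ^ M)%N.
move=> H e0 r0 H2; nia.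
Qed.

Lemma local_zero (f : {perm blk m}) r (E D D2 : {vspace blk m}) (Hp : blk m -> bool) c :
  DU f (2 ^ r) -> AI f r -> f 0 = 0 -> Hp 0 -> (forall u, u \in D -> Hp u) -> ~~ Hp c ->
  (forall t s, (s - t \in E) = (if Hp (f t) then f s - f t \in D else f s - f t \in D2)) ->
  forall t, t \in E -> t = 0.
Proof.
move=> du ai f0 H0 DH Hc rel t tE; apply/eqP; apply: contraT => t0.
have relE0 x : (x \in E) = (f x \in D).
  by have := rel 0 x; rewrite f0 H0 !subr0.
have fED : [set f x | x in [set y | y \in E]] = [set y | y \in D].
  apply/setP => y; rewrite inE; apply/imsetP/idP.
    by case=> x; rewrite inE relE0 => xE ->.
  by move=> yD; exists ((f^-1)%g y); rewrite ?inE ?relE0 permKV.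
have cardD : #|[set y | y \in D]| = #|[set y | y \in E]|.
  by rewrite -fED card_imset //; exact: perm_inj.
have cardD2 : (#|[set y | y \in D2]| <= #|[set y | y \in E]|)%N.
  pose phi u := (f^-1)%g (c + u) - (f^-1)%g c.
  have phiinj : injective phi.
    move=> u v Ep; apply: (addrI c); apply: (@perm_inj _ (f^-1)%g); exact: (addIr _ Ep).
  rewrite -(card_imset _ phiinj); apply: subset_leq_card.
  apply/subsetP => z /imsetP [u]; rewrite inE => uD2 ->; rewrite inE.
  by rewrite /phi rel !permKV (negbTE Hc) (addrC c u) addrK.
pose S := [set y | y \in D] :|: [set y | y \in D2].
have HS x : f (x + t) + f x \in S.
  have := rel x (x + t); rewrite (addrC x t) addrK tE !oppF2 /S !inE.
  by case: (Hp (f x)) => <- //; rewrite orbT.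
have cnt := @count_fun _ _ [set: blk m] S (fun x => f (x + t) + f x) (2 ^ r)
   (fun x _ => HS x).
have cnt2 : (#|[set: blk m]| <= #|S| * 2 ^ r)%N.
  apply: cnt => s _; apply: leq_trans (du t s t0).
  by apply: subset_leq_card; apply/subsetP => x; rewrite !inE.
rewrite cardsT card_blk in cnt2.
have cS : (#|S| <= #|[set y | y \in E]| + #|[set y | y \in E]| - 1)%N.
  rewrite /S cardsU cardD.
  have : (0 < #|[set y | y \in D] :&: [set y | y \in D2]|)%N.
    by apply/card_gt0P; exists 0; rewrite !inE !mem0v.
  lia.
have := leq_trans cnt2 (leq_mul cS (leqnn _)).
rewrite card_vs_set => /exp_arith dE.
have [[d1 d2]|[_ Dfull]] := ai _ _ fED.
  lia.
by move: Hc; rewrite DH // Dfull memvf.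
Qed.

End Loc2.


Lemma rowD' p q i (x y : 'M['F_2]_(p, q)) : row i (x + y) = row i x + row i y.
Proof. by apply/rowP => j; rewrite !mxE. Qed.
Lemma rowB' p q i (x y : 'M['F_2]_(p, q)) : row i (x - y) = row i x - row i y.
Proof. by apply/rowP => j; rewrite !mxE. Qed.
Lemma row0' p q i : row i (0 : 'M['F_2]_(p, q)) = 0.
Proof. by apply/rowP => j; rewrite !mxE. Qed.

Lemma half m (P : pred (blk m)) (phi : blk m -> blk m) : (0 < m)%N ->
  injective phi -> (forall t, ~~ P t -> P (phi t)) ->
  (2 ^ (m - 1) <= #|[set t | P t]|)%N.
Proof.
move=> m0 phiinj HP.
have H : (#|~: [set t | P t]| <= #|[set t | P t]|)%N.
  rewrite -(card_imset _ phiinj); apply: subset_leq_card.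
  by apply/subsetP => x /imsetP [y]; rewrite !inE => /HP Py ->.
have := cardsC [set t | P t]; rewrite card_blk.
have -> : (2 ^ m = 2 ^ (m - 1) * 2)%N by rewrite -expnSr; congr (_ ^ _)%N; lia.
lia.
Qed.

Section Fin.
Variables (b m : nat).

Lemma LA_Lpart (U W : {vspace VV b m}) :
  \dim U = (m * b).-1 -> (0 < m * b)%N -> (W <= U)%VS -> LA U W W = Lpart W.
Proof.
move=> dU mb0 sW; have vb := vbar_notin (notfull dU mb0).
apply/setP => X; rewrite /LA /Lpart inE; apply/orP/imsetP.
  by case=> /imsetP [v _ ->]; [exists v | exists (vbar U + v)].
case=> v _ ->; case: (boolP (v \in U)) => vU.
  by left; apply: imset_f; rewrite inE.
right; apply/imsetP; exists (v - vbar U); first by rewrite inE hyp2.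
by rewrite addrC subrK.
Qed.

Lemma Lpart0 : Lpart (0%VS : {vspace VV b m}) = singleton_partition b m.
Proof.
apply: eq_imset => v; apply/setP => y; rewrite !inE memv0 subr_eq0 //.
Qed.

End Fin.


Section Main.
Variables (m b r : nat) (g : 'I_b -> {perm blk m}).
Variables (U W1 W2 U' W1' W2' : {vspace VV b m}).
Hypotheses (mb0 : (0 < m * b)%N) (g0 : forall i, g i 0 = 0)
  (du : forall i, DU (g i) (2 ^ r)) (ai : forall i, AI (g i) r) (rm : (r < m - 1)%N)
  (dU : \dim U = (m * b).-1) (s1 : (W1 <= U)%VS) (s2 : (W2 <= U)%VS)
  (dU' : \dim U' = (m * b).-1) (s1' : (W1' <= U')%VS) (s2' : (W2' <= U')%VS)
  (JJ : Jset U :&: Jset U' = set0)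
  (Rg : forall x y, Rel U W1 W2 x y = Rel U' W1' W2' (parallel g x) (parallel g y)).

Local Notation gam := (parallel g).

Lemma notboth l : l \in Jset U -> l \notin Jset U'.
Proof.
move=> lJ; apply/negP => lJ'.
have: l \in Jset U :&: Jset U' by rewrite inE lJ lJ'.
by rewrite JJ inE.
Qed.

Lemma pemb l t : gam (emb l t) = emb l (g l t).
Proof. exact: parallel_emb. Qed.

Lemma ginv0 i : ((g i)^-1)%g 0 = 0.
Proof. by rewrite -{1}(g0 i) permK. Qed.

Lemma pinv_emb l t : parallel (pinv g) (emb l t) = emb l (((g l)^-1)%g t).
Proof. exact: parallel_emb ginv0. Qed.

Lemma pg0 : gam 0 = 0.
Proof. apply/row_matrixP => i; rewrite row_parallel !row0'. exact (g0 i). Qed.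

Lemma R0 a : (a \in W1) = (gam a \in W1').
Proof. by have := Rg 0 a; rewrite /Rel pg0 !mem0v /= !subr0. Qed.

Lemma pre_mem (W : {vspace VV b m}) l t : (t \in (embL m l @^-1: W)%VS) = (emb l t \in W).
Proof. by rewrite -memv_preim embLE. Qed.

Lemma zeroJ' l : l \in Jset U' -> forall t, emb l t \in W1 -> t = 0.
Proof.
move=> lJ'; have lnJ : l \notin Jset U by apply: contraL lJ' => /notboth.
case/inJP: (lJ') => c Hc.
have L : forall t, t \in (embL m l @^-1: W1)%VS -> t = 0.
  apply: (@local_zero _ (g l) r _ (embL m l @^-1: W1')%VS (embL m l @^-1: W2')%VS
            (fun u => emb l u \in U') c).
  - exact: du.
  - exact: ai.
  - exact: g0.
  - by rewrite emb0 mem0v.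
  - by move=> u; rewrite pre_mem => /(subvP s1').
  - exact: Hc.
  - move=> t s; rewrite !pre_mem !embB.
    by have := Rg (emb l t) (emb l s); rewrite /Rel (notinJ _ lnJ) !pemb.
by move=> t; rewrite -pre_mem; apply: L.
Qed.

Lemma zeroJ'1 l : l \in Jset U' -> forall u, emb l u \in W1' -> u = 0.
Proof.
move=> lJ' u uW.
have : emb l (((g l)^-1)%g u) \in W1 by rewrite R0 pemb permKV.
by move/(zeroJ' lJ') => e; rewrite -(permKV (g l) u) e g0.
Qed.

Lemma zeroJ l : l \in Jset U -> forall u, emb l u \in W1' -> u = 0.
Proof.
move=> lJ; have lnJ' := notboth lJ.
case/inJP: (lJ) => c Hc.
have L : forall t, t \in (embL m l @^-1: W1')%VS -> t = 0.
  apply: (@local_zero _ ((g l)^-1)%g r _ (embL m l @^-1: W1)%VS (embL m l @^-1: W2)%VS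
            (fun u => emb l u \in U) c).
  - exact: DU_inv.
  - exact: AI_inv.
  - exact: ginv0.
  - by rewrite emb0 mem0v.
  - by move=> u; rewrite pre_mem => /(subvP s1).
  - exact: Hc.
  - move=> t s; rewrite !pre_mem !embB.
    have := Rg (emb l (((g l)^-1)%g t)) (emb l (((g l)^-1)%g s)).
    by rewrite !pemb !permKV /Rel (notinJ _ lnJ') => ->.
by move=> t; rewrite -pre_mem; apply: L.
Qed.


Lemma m0 : (0 < m)%N.
Proof. lia. Qed.

Lemma halfJ l : l \in Jset U -> (2 ^ (m - 1) <= #|[set t | emb l t \in U]|)%N.
Proof.
case/inJP => c Hc; apply: (@half _ _ (fun t => t - c)) m0 _ _.
  exact: addIr.
by move=> t Ht; rewrite embB hyp2.
Qed.

Lemma halfJ' l : l \in Jset U' ->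
  (2 ^ (m - 1) <= #|[set t | emb l (g l t) \in U']|)%N.
Proof.
case/inJP => c Hc; apply: (@half _ _ (fun t => ((g l)^-1)%g (g l t - c))) m0 _ _.
  by move=> t s /perm_inj /addIr /perm_inj.
by move=> t Ht; rewrite permKV embB hyp2.
Qed.

Lemma delta_eq l t a :
  gam (emb l t + a) - gam (emb l t) - gam a =
  emb l (g l (t + row l a) - g l t - g l (row l a)).
Proof.
apply/row_matrixP => i; rewrite !rowB' !row_parallel rowD' !row_emb.
case: eqP => [->|_] //.
by rewrite add0r g0 subr0 subrr.
Qed.

Lemma addKx (x a : VV b m) : x + a - x = a.
Proof. by rewrite addrC addKr. Qed.

Lemma claim a l : a \in W1 -> row l a != 0 -> forall t, emb l t \in W1.
Proof.
move=> aW a0; set al := row l a.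
set X := [set t | (emb l t \in U) && (emb l (g l t) \in U')].
set D1 := [set d | emb l d \in W1'].
have HX t : t \in X -> g l (t + al) + g l t \in [set g l al + d | d in D1].
  rewrite inE => /andP [tU gtU].
  have H1 := Rg (emb l t) (emb l t + a).
  rewrite /Rel tU pemb gtU addKx aW in H1.
  have H2 : gam a \in W1' by rewrite -R0.
  have : emb l (g l (t + al) - g l t - g l al) \in W1'.
    by rewrite -delta_eq pemb rpredB // -H1.
  move=> Hd; apply/imsetP; exists (g l (t + al) - g l t - g l al); first by rewrite inE.
  by rewrite (addrC (g l al)) subrK oppF2.
have cX : (#|X| <= #|D1| * 2 ^ r)%N.
  have := @count_fun _ _ X [set g l al + d | d in D1] (fun t => g l (t + al) + g l t)
     (2 ^ r) HX.
  move=> H; apply: leq_trans (leq_mul (leq_imset_card _ _) (leqnn _)).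
  apply: H => s _; apply: leq_trans (du l s a0).
  by apply: subset_leq_card; apply/subsetP => x; rewrite !inE => /andP [].
have rm' : (2 ^ r < 2 ^ (m - 1))%N by rewrite ltn_exp2l.
case: (boolP (l \in Jset U)) => lJ.
  have D1s : (#|D1| <= 1)%N.
    apply: (@leq_trans #|[set (0 : blk m)]|); last by rewrite cards1.
    apply: subset_leq_card; apply/subsetP => d.
    by rewrite !inE => /(zeroJ lJ) ->.
  have : (#|[set t | emb l t \in U]| <= #|X|)%N.
    apply: subset_leq_card; apply/subsetP => t; rewrite !inE => ->.
    by rewrite notinJ // notboth.
  move=> Hsub.
  have e2 : (#|D1| * 2 ^ r <= 2 ^ r)%N by rewrite -{2}(mul1n (2 ^ r))%N leq_mul2r D1s orbT.
  have := leq_trans (halfJ lJ) (leq_trans Hsub (leq_trans cX e2)).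
  by rewrite leqNgt rm'.
case: (boolP (l \in Jset U')) => lJ'.
  have D1s : (#|D1| <= 1)%N.
    apply: (@leq_trans #|[set (0 : blk m)]|); last by rewrite cards1.
    apply: subset_leq_card; apply/subsetP => d.
    by rewrite !inE => /(zeroJ'1 lJ') ->.
  have : (#|[set t | emb l (g l t) \in U']| <= #|X|)%N.
    apply: subset_leq_card; apply/subsetP => t; rewrite !inE => ->.
    by rewrite notinJ.
  move=> Hsub.
  have e2 : (#|D1| * 2 ^ r <= 2 ^ r)%N by rewrite -{2}(mul1n (2 ^ r))%N leq_mul2r D1s orbT.
  have := leq_trans (halfJ' lJ') (leq_trans Hsub (leq_trans cX e2)).
  by rewrite leqNgt rm'.
have XT : X = setT.
  by apply/setP => t; rewrite !inE !notinJ.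
have D1E : D1 = [set d | d \in (embL m l @^-1: W1')%VS].
  by apply/setP => d; rewrite !inE pre_mem.
rewrite XT cardsT card_blk D1E card_vs_set -expnD leq_exp2l // in cX.
have fE : [set g l x | x in [set y | y \in (embL m l @^-1: W1)%VS]] =
          [set y | y \in (embL m l @^-1: W1')%VS].
  apply/setP => y; rewrite inE; apply/imsetP/idP.
    by case=> x; rewrite inE !pre_mem R0 pemb => ? ->.
  move=> yW; exists (((g l)^-1)%g y); last by rewrite permKV.
  by rewrite inE !pre_mem R0 pemb permKV -pre_mem.
case: (ai fE) => [[_ d2]|[Ef _]].
  lia.
by move=> t; rewrite -pre_mem Ef memvf.
Qed.

Definition II := [set i | (Vblk m i <= W1)%VS].
Definition inW (x : VV b m) := [forall i, (i \notin II) ==> (row i x == 0)].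

Lemma W1_inW x : (x \in W1) = inW x.
Proof.
apply/idP/forallP => [xW i|H].
  apply/implyP => iI; apply: contraR iI => r0; rewrite inE Vblk_sub.
  by apply/forallP; apply: claim xW r0.
rewrite (sum_emb x); apply: rpred_sum => i _; case: (boolP (i \in II)) => iI.
  by move: iI; rewrite inE Vblk_sub => /forallP; apply.
by have := H i; rewrite iI /= => /eqP ->; rewrite emb0 mem0v.
Qed.

Lemma W1_sum : W1 = (\sum_(i in II) Vblk m i)%VS.
Proof.
apply/eqP; rewrite eqEsubv; apply/andP; split.
  apply/subvP => x; rewrite W1_inW => /forallP H.
  rewrite (sum_emb x) (bigID (fun i => i \in II)) /= [X in _ + X]big1 ?addr0.
    by apply: memv_sumr => i _; exact: emb_Vblk.
  by move=> i iI; have := H i; rewrite (negbTE iI) /= => /eqP ->; exact: emb0.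
by apply/subv_sumP => i; rewrite inE.
Qed.

Lemma inW_par (h : 'I_b -> {perm blk m}) x :
  (forall i, h i 0 = 0) -> inW (parallel h x) = inW x.
Proof.
move=> h0; apply: eq_forallb => i; rewrite row_parallel; congr (_ ==> _).
apply/eqP/eqP => [E|->]; last exact: h0.
by apply: (@perm_inj _ (h i)); rewrite E h0.
Qed.

Lemma W1'_eq : W1' = W1.
Proof.
apply/vspaceP => y; set x := parallel (pinv g) y.
have -> : y = gam x by rewrite /x parallelKV.
by rewrite -R0 W1_inW [in RHS]W1_inW inW_par.
Qed.

Lemma inW_shift (h : 'I_b -> {perm blk m}) k c w :
  (forall i, h i 0 = 0) -> k \notin II ->
  inW (parallel h (emb k c + w) - parallel h (emb k c)) = inW w.
Proof.
move=> h0 kI; apply: eq_forallb => i; case: (boolP (i \in II)) => iI //=.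
rewrite rowB' !row_parallel rowD' !row_emb; case: (eqVneq i k) => [->|ik].
  rewrite subr_eq0; apply/eqP/eqP => [/perm_inj E|->]; last by rewrite addr0.
  by rewrite -(addKr c (row k w)) E addNr.
rewrite add0r h0 subr0; apply/eqP/eqP => [E|->]; last exact: h0.
by apply: (@perm_inj _ (h i)); rewrite E h0.
Qed.

Lemma W2_eq : W2 = W1.
Proof.
case: (J_nonempty dU mb0) => k kJ; case/inJP: (kJ) => c Hc.
have kI : k \notin II.
  rewrite inE Vblk_sub; apply/negP => /forallP H.
  by move: (H c) => /(subvP s1); rewrite (negbTE Hc).
apply/vspaceP => w.
have := Rg (emb k c) (emb k c + w).
rewrite /Rel (negbTE Hc) addKx pemb (notinJ _ (notboth kJ)) => ->.
by rewrite W1'_eq -pemb !W1_inW inW_shift.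
Qed.

Lemma W2'_eq : W2' = W1.
Proof.
case: (J_nonempty dU' mb0) => j jJ; case/inJP: (jJ) => c Hc.
have jI : j \notin II.
  rewrite inE Vblk_sub; apply/negP => /forallP H.
  by move: (H c); rewrite -W1'_eq => /(subvP s1'); rewrite (negbTE Hc).
have jnJ : j \notin Jset U by apply: contraL jJ => /notboth.
apply/vspaceP => y.
have := Rg (parallel (pinv g) (emb j c)) (parallel (pinv g) (emb j c + y)).
rewrite !parallelKV /Rel (negbTE Hc) addKx pinv_emb (notinJ _ jnJ) => <-.
by rewrite -pinv_emb !W1_inW inW_shift // => i; exact: ginv0.
Qed.

Lemma main_concl : nontrivial (LA U' W1' W2') ->
  [/\ wall W1, wall W1', wall W2 & wall W2'] /\
  [/\ W1 = W1', W1' = W2 & W2 = W2'] /\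
  (LA U W1 W2 = Lpart W1 /\ LA U' W1' W2' = Lpart W1').
Proof.
case=> nt1 _.
have e1 := W1'_eq; have e2 := W2_eq; have e3 := W2'_eq.
have s1'' : (W1 <= U')%VS by rewrite -e1.
rewrite e1 e3 in nt1 *; rewrite e2.
have wW : wall W1.
  exists II; split; last exact: W1_sum.
  - apply/eqP => I0; move: nt1; rewrite LA_Lpart // -Lpart0.
    suff -> : W1 = 0%VS by rewrite eqxx.
    apply/vspaceP => x; rewrite W1_inW memv0; apply/forallP/eqP => [H|->].
      apply/row_matrixP => i; have := H i; rewrite I0 inE /= => /eqP ->.
      by rewrite row0'.
    by move=> i; rewrite row0' eqxx implybT.
  - apply/eqP => IT; case: (notfull dU mb0) => x /negP; apply.
    apply: (subvP s1); rewrite W1_inW; apply/forallP => i; by rewrite IT inE.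
split; first by split.
split; first by split.
by split; apply: LA_Lpart.
Qed.

End Main.

Unset Implicit Arguments.
Theorem lemma3p12 (m b r : nat) (g : 'I_b -> {perm 'rV['F_2]_m})
    (U W1 W2 U' W1' W2' : {vspace 'M['F_2]_(b, m)}) :
  (1 < m)%N -> (1 < b)%N ->
  parallel g 0 = 0 ->
  (forall i, diff_uniform (g i) (2 ^ r)) ->
  (r < m - 1)%N ->
  (forall i, strongly_anti_invariant r (g i)) ->
  \dim U = (m * b).-1 -> (W1 <= U)%VS -> (W2 <= U)%VS ->
  \dim U' = (m * b).-1 -> (W1' <= U')%VS -> (W2' <= U')%VS ->
  Jset U :&: Jset U' = set0 ->
  maps_onto (parallel g) (LA U W1 W2) (LA U' W1' W2') ->
  nontrivial (LA U' W1' W2') ->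
  [/\ wall W1, wall W1', wall W2 & wall W2'] /\
  [/\ W1 = W1', W1' = W2 & W2 = W2'] /\
  (LA U W1 W2 = Lpart W1 /\ LA U' W1' W2' = Lpart W1').
Proof.
move=> m1 b1 _ hdu rm hsai dU s1 s2 dU' s1' s2' JJ Hmap Hnt.
have mb0 : (0 < m * b)%N by rewrite muln_gt0; apply/andP; split; lia.
have g0 i : g i 0 = 0 by case: (hsai i).
have du i : DU (g i) (2 ^ r) := DU_of (hdu i).
have ai i : AI (g i) r := AI_of (hsai i).
have Rg := Rel_map (@parallel_inj _ _ g) dU dU' mb0 s1 s2 s1' s2' Hmap.
exact: (main_concl mb0 g0 du ai rm dU s1 s2 dU' s1' s2' JJ Rg Hnt).
Qed.
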